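(* Let $\mathcal{K}$ be a connected simplicial complex, $(Z,d_Z)$ a metric space and $F:\mathrm{vert}(\mathcal{K})\to Z$ a function. Then the $F$-induced distance $d_F$ is a path-dominated distance function.
   Context: The $F$-induced distance is $d_F(x,y)=\min_{\pi}\max_{u\in\pi}d_Z(F(x),F(u))$, the minimum over all paths $\pi$ in the $1$-skeleton of $\mathcal{K}$ from $x$ to $y$. A function $d:\mathrm{vert}(\mathcal{K})\times\mathrm{vert}(\mathcal{K})\to\mathbb{R}_{\ge0}$ is path-dominated if (i) $d(x,y)\ge0$ and $d(x,x)=0$ for all vertices, and (ii) for any vertices $x,y$ there is a path $\pi^*$ from $x$ to $y$ in the $1$-skeleton with $d(x,y)=\max_{u\in\mathrm{vert}(\pi^* )}d(x,u)$. *)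

(* Defs.v *)
From HB Require Import structures.
From mathcomp Require Import all_boot all_order all_algebra.
From mathcomp Require Import classical_sets reals.
Set Implicit Arguments. Unset Strict Implicit. Unset Printing Implicit Defensive.
Import Order.TTheory GRing.Theory Num.Theory.
Local Open Scope ring_scope.

(* A (finite, abstract) simplicial complex on the vertex set V:
   a family of nonempty finite subsets closed under taking nonempty subsets,
   and every element of V is a vertex (so vert(K) = V). *)
Definition is_simplicial_complex (V : finType) (K : {set {set V}}) : Prop :=
  [/\ (finset.set0 : {set V}) \notin K,
      (forall s t : {set V}, s \in K -> t \subset s -> t != finset.set0 -> t \in K)
    & (forall v : V, [set v] \in K)].

Definition skel1 (V : finType) (K : {set {set V}}) : rel V :=
  fun x y => (x != y) && ([set x; y] \in K).

(* x :: p is a path in the 1-skeleton from x to y; its vertices are x :: p. *)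
Definition Kpath (V : finType) (K : {set {set V}}) (x : V) (p : seq V) (y : V)
  : Prop := path (skel1 K) x p /\ last x p = y.

Definition Kconnected (V : finType) (K : {set {set V}}) : Prop :=
  forall x y : V, exists p, Kpath K x p y.

(* maximum of f over the vertices x :: p of a path (f is nonnegative in use) *)
Definition pmax (R : realType) (V : Type) (f : V -> R) (x : V) (p : seq V) : R :=
  \big[Num.max/0]_(u <- x :: p) f u.

Definition is_metric (R : realType) (Z : Type) (dZ : Z -> Z -> R) : Prop :=
  [/\ forall a b, 0 <= dZ a b,
      forall a b, dZ a b = 0 <-> a = b,
      forall a b, dZ a b = dZ b a
    & forall a b c, dZ a c <= dZ a b + dZ b c].

Local Open Scope classical_set_scope.

(* The F-induced distance: min (taken as inf) over paths of the max of
   d_Z(F x, F u) over the vertices u of the path. *)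
Definition dF (R : realType) (V : finType) (Z : Type) (K : {set {set V}})
  (dZ : Z -> Z -> R) (F : V -> Z) (x y : V) : R :=
  inf [set pmax (fun u => dZ (F x) (F u)) x p | p in [set p | Kpath K x p y]].

Definition path_dominated (R : realType) (V : finType) (K : {set {set V}})
  (d : V -> V -> R) : Prop :=
  [/\ forall x y, 0 <= d x y,
      forall x, d x x = 0
    & forall x y, exists p, Kpath K x p y /\ d x y = pmax (d x) x p].

(* Main.v *)
Require Import Defs.
From mathcomp Require Import all_boot all_order all_algebra.
From mathcomp Require Import classical_sets reals.
From mathcomp Require Import boolp.
Import Order.TTheory GRing.Theory Num.Theory.

Section H.
Variable R : realType.
Local Open Scope ring_scope.
Local Open Scope classical_set_scope.

Lemma pmax_ge (V : eqType) (f : V -> R) x p u : u \in x :: p -> f u <= pmax f x p.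
Proof.
rewrite /pmax; elim: (x :: p) => [//|h t IH].
rewrite inE big_cons => /orP [/eqP ->|/IH H]; rewrite le_max ?lexx //.
by rewrite H orbT.
Qed.

Lemma pmax_le (V : eqType) (f : V -> R) x p c : 0 <= c ->
  (forall u, u \in x :: p -> f u <= c) -> pmax f x p <= c.
Proof.
rewrite /pmax => c0; elim: (x :: p) => [|h t IH] H; first by rewrite big_nil.
rewrite big_cons ge_max H ?inE ?eqxx //= IH // => u Hu.
by apply: H; rewrite inE Hu orbT.
Qed.

Lemma pmax_ge0 (V : Type) (f : V -> R) x p : 0 <= pmax f x p.
Proof.
rewrite /pmax; elim: (x :: p) => [|h t IH]; first by rewrite big_nil.
by rewrite big_cons le_max IH orbT.
Qed.

Lemma pmax_in (V : eqType) (f : V -> R) x p :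
  pmax f x p = 0 \/ exists2 u, u \in x :: p & pmax f x p = f u.
Proof.
rewrite /pmax; elim: (x :: p) => [|h t IH]; first by left; rewrite big_nil.
rewrite big_cons; case: (leP (f h) (\big[Num.max/0]_(j <- t) f j)) => _.
  case: IH => [->|[u Hu ->]]; first by left.
  by right; exists u => //; rewrite inE Hu orbT.
by right; exists h => //; rewrite inE eqxx.
Qed.

Lemma min_exists (s : seq R) (P : R -> Prop) :
  (exists a, P a) -> (forall a, P a -> a \in s) ->
  exists a, P a /\ forall b, P b -> a <= b.
Proof.
elim: s P => [|h t IH] P [a Pa] Hs; first by move: (Hs a Pa).
case: (pselect (exists a, P a /\ a != h)) => [[a' [Pa' na']]|N].
  have Hs' : forall b, P b /\ b != h -> b \in t.
    by move=> b [Pb nb]; move: (Hs b Pb); rewrite inE (negPf nb).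
  have [m [[Pm _] Hm]] := IH (fun a => P a /\ a != h) (ex_intro _ a' (conj Pa' na')) Hs'.
  - case: (pselect (P h)) => Ph.
      case: (leP h m) => hm.
        exists h; split => // b Pb; case: (eqVneq b h) => [->//|nb].
        exact: le_trans hm (Hm b (conj Pb nb)).
      exists m; split => // b Pb; case: (eqVneq b h) => [->|nb]; first exact: ltW.
      exact: Hm.
    exists m; split => // b Pb; case: (eqVneq b h) => [E|nb]; first by subst.
    exact: Hm.
have Ph : P h.
  case: (eqVneq a h) => [<-//|na]; by exfalso; apply: N; exists a.
exists h; split => // b Pb; case: (eqVneq b h) => [->//|nb].
by exfalso; apply: N; exists b.
Qed.

Lemma prefix_path (V : eqType) (e : rel V) x p u : u \in x :: p -> path e x p ->
  exists q, [/\ path e x q, last x q = u & {subset x :: q <= x :: p}].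
Proof.
elim: p x => [|h t IH] x.
  by rewrite mem_seq1 => /eqP -> _; exists [::]; split.
rewrite inE => /orP [/eqP ->|Hu] /= /andP [exh Ht].
  by exists [::]; split => // v; rewrite inE => /eqP ->; rewrite inE eqxx.
have [q [Pq Lq Sq]] := IH h Hu Ht.
exists (h :: q); split => //=; first by rewrite exh.
move=> v; rewrite inE => /orP [/eqP ->|Hv]; first by rewrite inE eqxx.
by rewrite inE (Sq v Hv) orbT.
Qed.

End H.
Local Open Scope ring_scope.
Local Open Scope classical_set_scope.

Theorem claim3 (R : realType) (V : finType) (K : {set {set V}})
  (Z : Type) (dZ : Z -> Z -> R) (F : V -> Z) :
  is_simplicial_complex K -> Kconnected K -> is_metric dZ ->
  path_dominated K (dF K dZ F).
Proof.
move=> _ Hc [d0 dE _ _].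
have att : forall x y, exists p, Kpath K x p y /\
    forall q, Kpath K x q y -> dF K dZ F x y = pmax (fun u => dZ (F x) (F u)) x p /\
       pmax (fun u => dZ (F x) (F u)) x p <= pmax (fun u => dZ (F x) (F u)) x q.
  move=> x y.
  set S := [set pmax (fun u => dZ (F x) (F u)) x p | p in [set p | Kpath K x p y]].
  have ne : exists a, S a.
    have [p Pp] := Hc x y; by exists (pmax (fun u => dZ (F x) (F u)) x p); exists p.
  have inW : forall a, S a -> a \in (0 :: [seq dZ (F x) (F u) | u <- enum V]).
    move=> a [p _ <-].
    case: (@pmax_in R _ (fun u => dZ (F x) (F u)) x p) => [->|[u _ ->]].
      by rewrite inE eqxx.
    by rewrite inE; apply/orP; right; apply/mapP; exists u; rewrite ?mem_enum.
  have [m [[p Pp Em] Hm]] := @min_exists R _ _ ne inW.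
  subst m.
  exists p; split => // q Pq.
  have Hle : pmax (fun u => dZ (F x) (F u)) x p <= pmax (fun u => dZ (F x) (F u)) x q.
    by apply: Hm; exists q.
  split => //.
  apply/le_anti/andP; split.
    by apply: ge_inf; [exists 0 => b [r _ <-]; apply: pmax_ge0 | exists p].
  apply: lb_le_inf; first by exists (pmax (fun u => dZ (F x) (F u)) x p); exists p.
  by move=> b Sb; apply: Hm.
have nn : forall x y, 0 <= dF K dZ F x y.
  move=> x y; have [p [Pp H]] := att x y; rewrite (H p Pp).1; exact: pmax_ge0.
have dxx : forall x, dF K dZ F x x = 0.
  move=> x; have [p [Pp H]] := att x x.
  have [E Le] := H [::] (conj (erefl true) erefl).
  rewrite E; apply/le_anti; rewrite pmax_ge0 andbT.
  apply: le_trans Le _; apply: pmax_le => // u; rewrite mem_seq1 => /eqP ->.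
  by rewrite (proj2 (dE _ _) erefl).
split => // x y.
have [p [Pp H]] := att x y.
have [E _] := H p Pp.
exists p; split => //.
apply/le_anti/andP; split.
  by case: Pp => _ <-; apply: pmax_ge; rewrite mem_last.
rewrite E; apply: pmax_le; first exact: pmax_ge0.
move=> u Hu; case: Pp => Pp Lp.
have [q [Pq Lq Sq]] := @prefix_path _ _ _ _ _ Hu Pp.
have [p' [Pp' H']] := att x u.
have [E' Le'] := H' q (conj Pq Lq).
rewrite E'; apply: le_trans Le' _.
apply: pmax_le; first exact: pmax_ge0.
by move=> v Hv; apply: pmax_ge; apply: Sq.
Qed.
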